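(* Let $\mathbb F$ be algebraically closed of characteristic $0$, let $V$ be a vector space over $\mathbb F$ of finite positive dimension, and let $A,A^*$ be a TD pair on $V$ of Krawtchouk type. Let $\dagger$ be the antiautomorphism of $\mathrm{End}(V)$ defined by $\langle Xu,v\rangle=\langle u,X^\dagger v\rangle$ for all $X\in\mathrm{End}(V)$, $u,v\in V$, where $\langle\,,\rangle$ is a nonzero bilinear form on $V$ satisfying $\langle Au,v\rangle=\langle u,Av\rangle$ and $\langle A^*u,v\rangle=\langle u,A^*v\rangle$ for all $u,v$ (such a form exists, is nondegenerate, and is unique up to a nonzero scalar, so $\dagger$ is well defined). Then $\dagger$ is the unique antiautomorphism of $\mathrm{End}(V)$ that fixes each of $A,A^*$. Moreover $X^{\dagger\dagger}=X$ for all $X\in\mathrm{End}(V)$.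
   Context: An antiautomorphism of $\mathrm{End}(V)$ is an $\mathbb F$-linear bijection $\varrho:\mathrm{End}(V)\to\mathrm{End}(V)$ with $(XY)^\varrho=Y^\varrho X^\varrho$. A TD pair on a finite-dimensional $\mathbb F$-vector space $V$ is an ordered pair $A,A^*$ of diagonalizable linear maps on $V$ such that for some ordering $V_0,\dots,V_d$ of the eigenspaces of $A$ one has $A^*V_i\subseteq V_{i-1}+V_i+V_{i+1}$ ($0\le i\le d$), for some ordering $V^*_0,\dots,V^*_\delta$ of the eigenspaces of $A^*$ one has $AV^*_i\subseteq V^*_{i-1}+V^*_i+V^*_{i+1}$ ($0\le i\le\delta$) (terms with out-of-range index are $0$), and no subspace $W\neq 0,V$ satisfies $AW\subseteq W$, $A^*W\subseteq W$. Such orderings are called standard; an ordering of eigenvalues is standard if the corresponding ordering of eigenspaces is. It is known that $d=\delta$ (the diameter). The TD pair has Krawtchouk type if the sequence $(d-2i)_{i=0}^d$ is a standard ordering of the eigenvalues of $A$ and also a standard ordering of the eigenvalues of $A^*$. *)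

(* Defs.v *)
(* Conventions: V = 'rV[F]_n (row vectors); a linear map X on V
   is a square matrix acting on the right, u |-> u *m X (MathComp's convention,
   matching mxalgebra's row spaces and [eigenspace]).  Subspaces of V are row
   spaces of matrices (mxalgebra, %MS). *)
From HB Require Import structures.
From mathcomp Require Import all_boot all_order all_algebra.
Set Implicit Arguments. Unset Strict Implicit. Unset Printing Implicit Defensive.
Import Order.TTheory GRing.Theory Num.Theory.
Local Open Scope ring_scope.

Section TD.
Variables (F : fieldType) (n : nat).

Definition esp (A : 'M[F]_n) (s : seq F) (i : nat) : 'M[F]_n :=
  if (i < size s)%N then eigenspace A s`_i else 0.

Definition esp3 (A : 'M[F]_n) (s : seq F) (i : nat) : 'M[F]_n :=
  ((if i is j.+1 then esp A s j else 0) + esp A s i + esp A s i.+1)%MS.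

Definition standard_ordering (A B : 'M[F]_n) (s : seq F) : Prop :=
  [/\ uniq s, (forall a, eigenvalue A a <-> a \in s) &
      forall i, (i < size s)%N -> (esp A s i *m B <= esp3 A s i)%MS].

Definition TD_pair (A As : 'M[F]_n) : Prop :=
  [/\ diagonalizable A, diagonalizable As,
      (exists s, standard_ordering A As s),
      (exists s, standard_ordering As A s) &
      forall W : 'M[F]_n, (W *m A <= W)%MS -> (W *m As <= W)%MS ->
        W = 0 \/ (1%:M <= W)%MS].

Definition krawtchouk_seq (d : nat) : seq F :=
  [seq (d%:R - (2 * i)%:R : F) | i <- iota 0 d.+1].

Definition Krawtchouk_TD_pair (A As : 'M[F]_n) : Prop :=
  TD_pair A As /\
  exists d : nat, standard_ordering A As (krawtchouk_seq d) /\
                  standard_ordering As A (krawtchouk_seq d).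

Definition bform (B : 'M[F]_n) (u v : 'rV[F]_n) : F := (u *m B *m v^T) 0 0.

(* antiautomorphism of End(V): F-linear bijection reversing products.
   (Matrices with *m form the opposite algebra of End(V) under the row
   convention; the antiautomorphism condition is invariant under this.) *)
Definition antiautomorphism (rho : 'M[F]_n -> 'M[F]_n) : Prop :=
  [/\ (forall (a : F) X Y, rho (a *: X + Y) = a *: rho X + rho Y),
      bijective rho &
      forall X Y, rho (X *m Y) = rho Y *m rho X].

Definition is_adjoint (B : 'M[F]_n) (dag : 'M[F]_n -> 'M[F]_n) : Prop :=
  forall X u v, bform B (u *m X) v = bform B u (v *m dag X).

End TD.

(* Main.v *)
Require Import Defs.
From Stdlib Require Import FunctionalExtensionality.
From HB Require Import structures.
From mathcomp Require Import all_boot all_order all_algebra.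
Import GRing.Theory.
Set Implicit Arguments. Unset Strict Implicit. Unset Printing Implicit Defensive.
Local Open Scope ring_scope.
Section Lin.
Variables (F : fieldType) (m : nat) (s : 'M[F]_m -> 'M[F]_m) (y : 'rV[F]_m) (c : 'cV[F]_m).
Hypothesis slin : forall a X Y, s (a *: X + Y) = a *: s X + s Y.
Definition phi (u : 'rV[F]_m) : 'rV[F]_m := y *m s (c *m u).
Lemma phi_lin : linear_for *:%R phi.
Proof. by move=> a u v; rewrite /phi mulmxDr -scalemxAr slin mulmxDr -scalemxAr. Qed.
HB.instance Definition _ := GRing.isLinear.Build F 'rV[F]_m 'rV[F]_m *:%R phi phi_lin.
Lemma mul_phi u : u *m lin1_mx phi = phi u.
Proof. exact: mul_rV_lin1. Qed.
End Lin.

Lemma schur (F : closedFieldType) n (A As S : 'M[F]_n.+1)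
  (irr : forall W : 'M[F]_n.+1, (W *m A <= W)%MS -> (W *m As <= W)%MS ->
        W = 0 \/ (1%:M <= W)%MS) :
  A *m S = S *m A -> As *m S = S *m As -> exists l, S = l%:M.
Proof.
move=> hA hAs.
have [l hl] : exists l, eigenvalue S l.
  have /closed_rootP [l hl] : size (char_poly S) != 1 by rewrite size_char_poly.
  by exists l; rewrite eigenvalue_root_char.
have hW : eigenspace S l *m S = l *: eigenspace S l by apply/eigenspaceP.
have stab : forall M, M *m S = S *m M ->
   (eigenspace S l *m M <= eigenspace S l)%MS.
  move=> M hM; apply/eigenspaceP.
  by rewrite -mulmxA hM mulmxA hW scalemxAl.
case: (irr _ (stab _ hA) (stab _ hAs)) => [h0|h1].
  by move: hl; rewrite /eigenvalue h0 eqxx.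
exists l; move/eigenspaceP: h1.
by rewrite mul1mx scalemx1.
Qed.

Lemma aut_id (F : closedFieldType) n (A As : 'M[F]_n.+1)
  (irr : forall W : 'M[F]_n.+1, (W *m A <= W)%MS -> (W *m As <= W)%MS ->
        W = 0 \/ (1%:M <= W)%MS)
  (s : 'M[F]_n.+1 -> 'M[F]_n.+1)
  (slin : forall a X Y, s (a *: X + Y) = a *: s X + s Y)
  (sinj : injective s)
  (smul : forall X Y, s (X *m Y) = s X *m s Y) :
  s A = A -> s As = As -> forall X, s X = X.
Proof.
move=> sA sAs.
have s0 : s 0 = 0.
  have h := slin 1 0 0; rewrite (scale1r (s 0)) (scale1r (0 : 'M[F]_n.+1)) !addr0 in h.
  by apply: (addrI (s 0)); rewrite addr0 -h.
pose E : 'M[F]_n.+1 := delta_mx 0 0.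
have E0 : E != 0.
  apply/eqP => /matrixP/(_ 0 0); rewrite !mxE /= => /eqP.
  by rewrite oner_eq0.
have sE0 : s E != 0.
  apply/eqP => h; move/eqP: E0; apply; apply: sinj; by rewrite h s0.
have [v /submxP [y ->] nz] := rowV0Pn sE0.
pose c : 'cV[F]_n.+1 := delta_mx 0 0.
pose S := lin1_mx (phi s y c).
have key : forall X, X *m S = S *m s X.
  move=> X; apply/row_matrixP => i; rewrite !rowE !mulmxA !mul_phi //.
  by rewrite /phi !mulmxA smul mulmxA.
have kA := key A; have kAs := key As; rewrite sA in kA; rewrite sAs in kAs.
have [l hl] := schur irr kA kAs.
have l0 : l != 0.
  apply: contraNneq nz => hl0.
  have := @mul_phi F n.+1 s y c slin (delta_mx 0 0).
  rewrite -/S hl hl0 mul_mx_scalar scale0r /phi mul_delta_mx => <-.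
  by [].
move=> X; apply: (scalerI l0); have := key X.
by rewrite hl mul_mx_scalar mul_scalar_mx => ->.
Qed.

Lemma bform_eq (F : fieldType) n (M N : 'M[F]_n) :
  (forall u v : 'rV[F]_n, (u *m M *m v^T) 0 0 = (u *m N *m v^T) 0 0) -> M = N.
Proof.
move=> h; apply/matrixP => i j; have := h (delta_mx 0 i) (delta_mx 0 j).
by rewrite trmx_delta -!rowE -!colE !mxE.
Qed.

Lemma adj_eq (F : fieldType) n (B X Y : 'M[F]_n) :
  (forall u v, bform B (u *m X) v = bform B u (v *m Y)) -> X *m B = B *m Y^T.
Proof.
move=> h; apply: bform_eq => u v; have := h u v.
by rewrite /bform trmx_mul !mulmxA.
Qed.

Theorem theorem10p2 (F : closedFieldType) (charF0 : [pchar F] =i pred0)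
  (n : nat) (A As : 'M[F]_n.+1) :
  Krawtchouk_TD_pair A As ->
  forall B : 'M[F]_n.+1, B != 0 ->
  (forall u v, bform B (u *m A) v = bform B u (v *m A)) ->
  (forall u v, bform B (u *m As) v = bform B u (v *m As)) ->
  (exists dag, is_adjoint B dag) /\
  (forall dag, is_adjoint B dag ->
     [/\ antiautomorphism dag, dag A = A, dag As = As,
         (forall rho, antiautomorphism rho -> rho A = A -> rho As = As ->
            rho = dag)
       & forall X, dag (dag X) = X]).
Proof.
move=> [[_ _ _ _ irr] _] B Bnz hA hAs.
have hAB := adj_eq hA; have hAsB := adj_eq hAs.
have Bu : B \in unitmx.
  have stab : forall M, M *m B = B *m M^T -> (kermx B *m M <= kermx B)%MS.
    by move=> M hM; rewrite sub_kermx -mulmxA hM mulmxA mulmx_ker mul0mx.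
  case: (irr _ (stab _ hAB) (stab _ hAsB)) => [/eqP|].
    by rewrite kermx_eq0 row_free_unit.
  by rewrite sub_kermx mul1mx (negbTE Bnz).
pose dag0 X := (invmx B *m X *m B)^T.
have adj0 : is_adjoint B dag0.
  move=> X u v; rewrite /bform /dag0 trmx_mul trmxK !mulmxA mulmxK //.
have uniq0 : forall dag, is_adjoint B dag -> forall X, dag X = dag0 X.
  move=> dag hd X; have hX := adj_eq (hd X).
  by rewrite /dag0 -mulmxA hX mulKmx // trmxK.
split; first by exists dag0.
move=> dag hd; have hd0 := uniq0 dag hd.
have dlin : forall a X Y, dag (a *: X + Y) = a *: dag X + dag Y.
  move=> a X Y; rewrite !hd0 /dag0 mulmxDr mulmxDl -scalemxAr -scalemxAl.
  exact: linearP.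
have dmul : forall X Y, dag (X *m Y) = dag Y *m dag X.
  by move=> X Y; rewrite !hd0 /dag0 -trmx_mul !mulmxA mulmxK.
have dbij : bijective dag.
  exists (fun Y => B *m Y^T *m invmx B) => [X|Y]; rewrite hd0 /dag0.
    by rewrite trmxK !mulmxA mulmxK // mulmxV // mul1mx.
  by rewrite !mulmxA mulmxKV // mulVmx // mul1mx trmxK.
have dA : forall M, M *m B = B *m M^T -> dag M = M.
  by move=> M hM; rewrite hd0 /dag0 -mulmxA hM mulKmx // trmxK.
have dinv : forall X, dag (dag X) = X.
  apply: (aut_id irr (s := fun X => dag (dag X))).
  - by move=> a X Y; rewrite !dlin.
  - by apply: inj_comp; apply: bij_inj.
  - by move=> X Y; rewrite !dmul.
  - by rewrite !dA.
  - by rewrite !dA.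
split=> //; try exact: dA.
move=> rho [rlin rbij rmul] rA rAs; apply: functional_extensionality => X.
have h : forall X, dag (rho X) = X.
  apply: (aut_id irr (s := fun X => dag (rho X))).
  - by move=> a Y Z; rewrite rlin dlin.
  - by apply: inj_comp; apply: bij_inj.
  - by move=> Y Z; rewrite rmul dmul.
  - by rewrite rA dA.
  - by rewrite rAs dA.
by rewrite -[rho X]dinv h.
Qed.
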